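(* Let $T$ be an ordered tree with $\ell\ge 2$ vertices. Then there is a constant $C=C(T)$ such that $r_o(T,K_n)\le C\,n^{\ell}$ for all $n\ge 1$; that is, $r_o(T,K_n)=O(n^\ell)$.
   Context: An ordered graph $G$ on $n$ vertices has vertex set $[n]=\{1,\dots,n\}$ with the natural linear order; an ordered tree is an ordered graph whose underlying graph is a tree. An ordered graph $G$ on $[n]$ is contained in an ordered graph $H$ on a linearly ordered vertex set if there is an injective map $f$ from $[n]$ to $V(H)$ with $f(i)<f(j)$ whenever $i<j$ and $f(i)f(j)\in E(H)$ whenever $ij\in E(G)$; such an image is an ordered copy of $G$. $K_n$ denotes the complete graph on $[n]$. The online ordered Ramsey game for $(G_1,G_2)$ is played by Builder and Painter on the vertex set $\mathbb N$ with its natural order. On each turn Builder selects a previously unselected pair of vertices (an edge) and Painter then colors it red or blue. Builder wins as soon as the colored edges contain an ordered red copy of $G_1$ or an ordered blue copy of $G_2$; Builder tries to minimize and Painter tries to maximize the number of turns. The online ordered Ramsey number $r_o(G_1,G_2)$ is the number of turns after which Builder wins when both players play optimally. *)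

(* Defs.v *)
From mathcomp Require Import all_boot.
Set Implicit Arguments. Unset Strict Implicit. Unset Printing Implicit Defensive.

(* An ordered graph on [m] is encoded on the vertex type 'I_m (vertex i+1 of the
   paper is the ordinal i), with its natural order, by an edge relation e
   (assumed symmetric and irreflexive where relevant). *)

Definition connected_graph (m : nat) (e : rel 'I_m) : Prop :=
  forall x y : 'I_m, connect e x y.

Definition acyclic_graph (m : nat) (e : rel 'I_m) : Prop :=
  forall c : seq 'I_m, uniq c -> 3 <= size c -> ~~ cycle e c.

Definition is_tree (m : nat) (e : rel 'I_m) : Prop :=
  connected_graph e /\ acyclic_graph e.

Definition complete_rel (n : nat) : rel 'I_n := fun i j => i != j.

(* A board state: the list of colored edges so far.  An edge between vertices
   a < b of N is stored as the pair (a, b); color true = red, false = blue. *)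
Definition board := seq ((nat * nat) * bool).

Definition contains_copy (m : nat) (e : rel 'I_m) (col : bool) (s : board) : Prop :=
  exists f : 'I_m -> nat,
    (forall i j : 'I_m, i < j -> f i < f j) /\
    (forall i j : 'I_m, i < j -> e i j -> ((f i, f j), col) \in s).

Definition builder_has_won (m1 : nat) (e1 : rel 'I_m1) (m2 : nat) (e2 : rel 'I_m2)
  (s : board) : Prop :=
  contains_copy e1 true s \/ contains_copy e2 false s.

(* On each turn Builder picks a previously unselected
   pair {a, b} (a < b) and Painter colors it. *)
Fixpoint builder_wins_within (m1 : nat) (e1 : rel 'I_m1) (m2 : nat) (e2 : rel 'I_m2)
  (k : nat) (s : board) : Prop :=
  builder_has_won e1 e2 s \/
  match k with
  | 0 => False
  | k'.+1 => exists a b : nat, a < b /\ (a, b) \notin map fst s /\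
              forall c : bool, builder_wins_within e1 e2 k' (rcons s ((a, b), c))
  end.

(* r_o(G1, G2) <= N  iff  Builder can force a win within N turns from the empty
   board (r_o is the least such N). *)
Definition online_ordered_ramsey_le (m1 : nat) (e1 : rel 'I_m1) (m2 : nat) (e2 : rel 'I_m2)
  (N : nat) : Prop :=
  builder_wins_within e1 e2 N [::].

(* Main.v *)
Require Import Defs.
From mathcomp Require Import all_boot.
From mathcomp Require Import all_boot zify.
Set Implicit Arguments. Unset Strict Implicit. Unset Printing Implicit Defensive.

Definition bsub (s t : board) := forall x, x \in s -> x \in t.

Fixpoint R (k : nat) (s : board) (Q : board -> Prop) : Prop :=
  Q s \/ match k with 0 => False | k'.+1 =>
    exists a b : nat, a < b /\ forall c : bool, R k' (rcons s ((a,b),c)) Q end.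

Lemma bsub_refl s : bsub s s. Proof. by []. Qed.
Lemma bsub_trans s t u : bsub s t -> bsub t u -> bsub s u.
Proof. by move=> H1 H2 x /H1 /H2. Qed.
Lemma bsub_rcons s x : bsub s (rcons s x).
Proof. by move=> y; rewrite mem_rcons in_cons => ->; rewrite orbT. Qed.
Lemma bsub_rcons2 s t x : bsub s t -> bsub (rcons s x) (rcons t x).
Proof. by move=> H y; rewrite !mem_rcons !in_cons => /orP [->|/H ->]; rewrite ?orbT. Qed.

Lemma R_mono_k k k' s Q : R k s Q -> k <= k' -> R k' s Q.
Proof.
elim: k k' s => [|k IH] k' s /=.
- by case=> // HQ _; case: k' => /= *; left.
- case: k' => [|k'] /=; first by [].
  case=> [HQ|[a [b [ab H]]]] Hk; first by left.
  by right; exists a, b; split=> // c; apply: IH (H c) _.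
Qed.

Lemma R_conseq k s Q Q' : R k s Q -> (forall s', bsub s s' -> Q s' -> Q' s') -> R k s Q'.
Proof.
elim: k s => [|k IH] s /=.
- by case=> // HQ H; left; apply: H.
- case=> [HQ|[a [b [ab H]]]] HH; first by left; apply: HH.
  right; exists a, b; split=> // c; apply: IH (H c) _ => s' Hs'.
  by apply: HH; apply: bsub_trans Hs'; apply: bsub_rcons.
Qed.

Lemma R_bind k k' s Q Q' : R k s Q ->
  (forall s', bsub s s' -> Q s' -> R k' s' Q') -> R (k + k') s Q'.
Proof.
elim: k s => [|k IH] s /=.
- by case=> // HQ H; apply: H.
- case=> [HQ|[a [b [ab H]]]] HH.
  + exact: (R_mono_k (HH _ (@bsub_refl s) HQ) (leq_addl k.+1 k')).
  + right; exists a, b; split=> // c; apply: IH (H c) _ => s' Hs'.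
    by apply: HH; apply: bsub_trans Hs'; apply: bsub_rcons.
Qed.

Definition mono (Q : board -> Prop) := forall s t, bsub s t -> Q s -> Q t.

Lemma R_sub k s t Q : mono Q -> R k s Q -> bsub s t -> R k t Q.
Proof.
move=> HM; elim: k s t => [|k IH] s t /=.
- by case=> // HQ H; left; apply: HM HQ.
- case=> [HQ|[a [b [ab H]]]] Hst; first by left; apply: HM HQ.
  by right; exists a, b; split=> // c; apply: IH (H c) _; apply: bsub_rcons2.
Qed.

Lemma contains_mono m (e : rel 'I_m) col : mono (contains_copy e col).
Proof. by move=> s t H [f [H1 H2]]; exists f; split=> // i j ij eij; apply/H/H2. Qed.

Lemma won_mono m1 (e1 : rel 'I_m1) m2 (e2 : rel 'I_m2) : mono (builder_has_won e1 e2).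
Proof.
by move=> s t H [H1|H1]; [left|right]; apply: contains_mono H1.
Qed.

Lemma bw_mono_k m1 (e1 : rel 'I_m1) m2 (e2 : rel 'I_m2) k s :
  builder_wins_within e1 e2 k s -> builder_wins_within e1 e2 k.+1 s.
Proof.
elim: k s => [|k IH] s /=; first by case=> // H; left.
case=> [H|[a [b [ab [nab H]]]]]; first by left.
by right; exists a, b; do 2!split=> //; move=> c; apply: IH.
Qed.

Lemma bw_equiv m1 (e1 : rel 'I_m1) m2 (e2 : rel 'I_m2) k s t :
  builder_wins_within e1 e2 k s -> bsub s t -> bsub t s ->
  builder_wins_within e1 e2 k t.
Proof.
elim: k s t => [|k IH] s t /=.
- by case=> // H H1 _; left; apply: won_mono H.
- case=> [H|[a [b [ab [nab H]]]]] H1 H2; first by left; apply: won_mono H.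
  right; exists a, b; split=> //; split.
  + apply/negP=> /mapP [x /H2 xs ex]; move/negP: nab; apply; apply/mapP.
    by exists x.
  + by move=> c; apply: IH (H c) _ _; apply: bsub_rcons2.
Qed.

Lemma R_toB m1 (e1 : rel 'I_m1) m2 (e2 : rel 'I_m2) k s :
  R k s (builder_has_won e1 e2) -> builder_wins_within e1 e2 k s.
Proof.
elim: k s => [|k IH] s /=; first by case=> // H; left.
case=> [H|[a [b [ab H]]]]; first by left.
case: (boolP ((a, b) \in map fst s)) => [/mapP [[[a' b'] c0] xs /= ex]|nab].
- apply: bw_mono_k; apply: (@bw_equiv _ _ _ _ _ (rcons s ((a,b),c0))).
  + exact: IH.
  + by move=> y; rewrite mem_rcons in_cons => /orP [/eqP ->|//]; rewrite ex.
  + by apply: bsub_rcons.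
- by right; exists a, b; do 2!split=> //; move=> c; apply: IH.
Qed.

Fixpoint RB (B k : nat) (s : board) (Q : board -> Prop) : Prop :=
  Q s \/ match k with 0 => False | k'.+1 =>
    exists a b : nat, a < b /\ b < B /\ forall c : bool, RB B k' (rcons s ((a,b),c)) Q end.

Lemma RB_mono B B' k s Q : RB B k s Q -> B <= B' -> RB B' k s Q.
Proof.
move=> H BB; elim: k s H => [|k IH] s /=; first by [].
case=> [H|[a [b [ab [bB H]]]]]; first by left.
right; exists a, b; split=> //; split; first by apply: leq_trans BB.
by move=> c; apply: IH.
Qed.

Lemma R_RB k s Q : R k s Q -> exists B, RB B k s Q.
Proof.
elim: k s => [|k IH] s /=; first by case=> // H; exists 0; left.
case=> [H|[a [b [ab H]]]]; first by exists 0; left.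
have [B1 H1] := IH _ (H true); have [B2 H2] := IH _ (H false).
exists (maxn b.+1 (maxn B1 B2)); right; exists a, b; split=> //; split.
  by rewrite leq_max leqnn.
case; [apply: (RB_mono H1)|apply: (RB_mono H2)]; rewrite !leq_max leqnn ?orbT //.
Qed.

Definition push (h : nat -> nat) (x : (nat*nat)*bool) : (nat*nat)*bool :=
  ((h x.1.1, h x.1.2), x.2).
Definition bnd B (t : board) := forall x, x \in t -> x.1.1 < x.1.2 < B.

Lemma relabel h B k t s Q : (forall i j, i < j -> h i < h j) ->
  RB B k t Q -> bnd B t -> bsub (map (push h) t) s ->
  R k s (fun s' => exists t', Q t' /\ bnd B t' /\ bsub (map (push h) t') s').
Proof.
move=> hm; elim: k t s => [|k IH] t s /=.
- by case=> // HQ Hb Hs; left; exists t.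
- case=> [HQ|[a [b [ab [bB H]]]]] Hb Hs; first by left; exists t.
  right; exists (h a), (h b); split; first exact: hm.
  move=> c; apply: IH (H c) _ _.
  + move=> x; rewrite mem_rcons in_cons => /orP [/eqP -> /=|/Hb //].
    by rewrite ab bB.
  + by rewrite map_rcons; apply: bsub_rcons2.
Qed.

Lemma push_copy m (e : rel 'I_m) col h t s : (forall i j, i < j -> h i < h j) ->
  contains_copy e col t -> bsub (map (push h) t) s -> contains_copy e col s.
Proof.
move=> hm [f [Hf He]] Hs; exists (h \o f); split.
  by move=> i j ij; apply/hm/Hf.
move=> i j ij eij; apply: Hs; exact: (map_f (push h) (He i j ij eij)).
Qed.

Lemma clamp m (e : rel 'I_m) col t B : contains_copy e col t -> bnd B t ->
  exists f : 'I_m -> nat, (forall i j : 'I_m, i < j -> f i < f j) /\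
    (forall i j : 'I_m, i < j -> e i j -> ((f i, f j), col) \in t) /\
    (forall i : 'I_m, f i < B + m).
Proof.
move=> [f [Hf He]] Hb.
exists (fun i : 'I_m => if f i < B then f i else B + i); split; [|split].
- move=> i j ij; have := Hf i j ij.
  case: ifP; case: ifP => // *; lia.
- move=> i j ij eij; have H := He i j ij eij; have /andP [H1 H2] := Hb _ H.
  by rewrite /= in H1 H2; rewrite H2 (ltn_trans H1 H2).
- move=> i; case: ifP => H; first lia.
  have := ltn_ord i; lia.
Qed.

Definition bluep (s : board) a b := ((minn a b, maxn a b), false) \in s.
Definition redp (s : board) a b := ((minn a b, maxn a b), true) \in s.

Lemma clique n (W : seq nat) s : uniq W -> size W = n ->
  (forall a b, a \in W -> b \in W -> a != b -> bluep s a b) ->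
  contains_copy (@complete_rel n) false s.
Proof.
move=> uW sW Hb.
set L := sort leq W.
have sL : sorted ltn L by rewrite ltn_sorted_uniq_leq sort_uniq uW sort_sorted //; exact: leq_total.
have szL : size L = n by rewrite size_sort.
have memL x : (x \in L) = (x \in W) by rewrite mem_sort.
exists (fun i => nth 0 L i); split.
  move=> i j ij; apply: (sorted_ltn_nth ltn_trans) => //; rewrite inE szL ltn_ord //.
move=> i j ij _.
have lt : nth 0 L i < nth 0 L j.
  apply: (sorted_ltn_nth ltn_trans) => //; rewrite inE szL ltn_ord //.
have := Hb (nth 0 L i) (nth 0 L j).
rewrite -!memL !mem_nth ?szL ?ltn_ord // => /(_ isT isT).
rewrite neq_ltn lt => /(_ isT).
by rewrite /bluep (minn_idPl (ltnW lt)) (maxn_idPr (ltnW lt)).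
Qed.

Definition ins m (g : 'I_m -> nat) (v : 'I_m.+1) (x : nat) (i : 'I_m.+1) : nat :=
  if unlift v i is Some j then g j else x.

Lemma liftE m (v : 'I_m.+1) (j : 'I_m) : (lift v j : nat) = j + (v <= j).
Proof. by rewrite /= /bump addnC. Qed.

Lemma ins_copy m (T : rel 'I_m.+1) (v : 'I_m.+1) (g : 'I_m -> nat) (x : nat) (s : board) : symmetric T ->
  (forall i j : 'I_m, i < j -> g i < g j) ->
  (forall i j : 'I_m, i < j -> T (lift v i) (lift v j) -> ((g i, g j), true) \in s) ->
  (forall j : 'I_m, j < v -> g j < x) -> (forall j : 'I_m, v <= j -> x < g j) ->
  (forall j : 'I_m, T v (lift v j) -> redp s (g j) x) ->
  contains_copy T true s.
Proof.
move=> Tsym gi gE gl gr gv; exists (ins g v x); split.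
- move=> i i'; rewrite /ins.
  case: unliftP => [j ->|->]; case: unliftP => [j' ->|->]; rewrite ?liftE => H.
  + apply: gi; move: H; case: (leqP v j); case: (leqP v j') => /= *; lia.
  + apply: gl; move: H; case: (leqP v j) => /= H; lia.
  + apply: gr; move: H; case: (leqP v j') => /= H; lia.
  + by rewrite ltnn in H.
- move=> i i'; rewrite /ins.
  case: unliftP => [j ->|->]; case: unliftP => [j' ->|->]; rewrite ?liftE => H.
  + apply: gE; move: H; case: (leqP v j); case: (leqP v j') => /= *; lia.
  + rewrite Tsym => /gv; rewrite /redp.
    have lt : g j < x by apply: gl; move: H; case: (leqP v j) => /= H; lia.
    by rewrite (minn_idPl (ltnW lt)) (maxn_idPr (ltnW lt)).
  + move=> /gv; rewrite /redp.
    have lt : x < g j' by apply: gr; move: H; case: (leqP v j') => /= H; lia.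
    by rewrite (minn_idPr (ltnW lt)) (maxn_idPl (ltnW lt)).
  + by rewrite ltnn in H.
Qed.

Lemma slot m (f : 'I_m -> nat) (v : nat) lo S Bm :
  (forall i j : 'I_m, i < j -> f i < f j) -> v <= m -> (forall i, f i < Bm) ->
  exists lo', lo <= lo' /\ lo' + S <= lo + Bm.+1 * S /\
   (forall j : 'I_m, j < v -> lo + (f j).+1 * S <= lo') /\
   (forall j : 'I_m, v <= j -> lo' + S <= lo + (f j).+1 * S).
Proof.
move=> fi vm fB.
have fw : forall i j : 'I_m, i <= j -> f i <= f j.
  move=> i j; rewrite leq_eqVlt => /orP [/eqP ij|/fi/ltnW //].
  by rewrite (val_inj ij).
case: v vm => [|v] vm.
- case: m f fi fB fw vm => [|m] f fi fB fw _.
    exists lo; do !split => //; try (by case); nia.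
  exists (lo + f ord0 * S); do !split.
  + lia.
  + have := fB ord0; nia.
  + by [].
  + move=> j _; have := fw ord0 j isT; nia.
- set jv : 'I_m := Ordinal vm.
  exists (lo + (f jv).+1 * S); do !split.
  + lia.
  + have := fB jv; nia.
  + move=> j jl; have : f j <= f jv by apply: fw; rewrite /= -ltnS.
    nia.
  + move=> j jl; have : f jv < f j by apply: fi.
    nia.
Qed.

Lemma sub_acyclic m (T : rel 'I_m.+1) (v : 'I_m.+1) :
  acyclic_graph T -> acyclic_graph (fun j j' : 'I_m => T (lift v j) (lift v j')).
Proof.
move=> Ha c uc sc; apply/negP => cc.
have := Ha (map (lift v) c); rewrite map_inj_uniq ?size_map; last exact: lift_inj.
by move=> /(_ uc sc); rewrite cycle_map cc.
Qed.

Lemma card_bound m (s : seq 'I_m) : uniq s -> size s <= m.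
Proof.
move=> us; move/card_uniqP: us => <-.
by apply: leq_trans (max_card _) _; rewrite card_ord.
Qed.

Lemma max_path m (T : rel 'I_m.+1) d (x : 'I_m.+1) q :
  uniq (x :: q) -> path T x q -> m.+1 - size (x :: q) <= d ->
  exists x' q', [/\ uniq (x' :: q'), path T x' q' &
     forall y, T (last x' q') y -> y \in x' :: q'].
Proof.
elim: d x q => [|d IH] x q uq pq sd;
  case: (pickP (fun y => T (last x q) y && (y \notin x :: q))) => [y /andP [Ty ny]|Hn].
- have := card_bound (s := y :: x :: q); rewrite cons_uniq ny uq => /(_ isT).
  move: sd => /=; lia.
- exists x, q; split=> // y Ty; have := Hn y; rewrite Ty /=.
  by move/negbT; rewrite negbK.
- apply: (IH x (rcons q y)).
  + by rewrite -rcons_cons rcons_uniq ny uq.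
  + by rewrite rcons_path pq Ty.
  + by move: sd; rewrite /= size_rcons; lia.
- exists x, q; split=> // y Ty; have := Hn y; rewrite Ty /=.
  by move/negbT; rewrite negbK.
Qed.

Lemma leaf m (T : rel 'I_m.+1) : symmetric T -> irreflexive T -> acyclic_graph T ->
  exists v, (forall x, ~~ T v x) \/ exists u, T v u /\ forall x, T v x -> x = u.
Proof.
move=> Ts Ti Ta.
have [x [q [uq pq mq]]] := @max_path m T m ord0 [::] isT isT (leq_subr _ _).
case/lastP: q uq pq mq => [|q1 y] uq pq mq.
  exists x; left => z; apply/negP => Txz; have := mq _ Txz.
  by rewrite inE => /eqP e; rewrite e Ti in Txz.
rewrite last_rcons in mq.
move: pq; rewrite rcons_path => /andP [pq1 Tzy].
exists y; right; exists (last x q1); split; first by rewrite Ts.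
move=> y2 Ty2; apply/eqP; apply/negP => /negP ne.
have ny : y2 != y by apply/eqP => e; rewrite e Ti in Ty2.
have := mq _ Ty2; rewrite -rcons_cons mem_rcons in_cons (negbTE ny) /=.
rewrite in_cons => /orP [/eqP ex|yq].
- (* cycle is the whole path *)
  subst y2.
  case: q1 uq pq1 Tzy ne mq => [|a q1] uq pq1 Tzy ne mq; first by rewrite eqxx in ne.
  have := Ta (x :: rcons (a :: q1) y) uq; rewrite /= size_rcons => /(_ isT).
  move=> /negP; apply; change (path T x (rcons (rcons (a :: q1) y) x)).
  by rewrite !rcons_path pq1 Tzy last_rcons Ty2.
- case/splitPr: yq uq pq1 Tzy ne => r1 r2 uq pq1 Tzy ne.
  move: pq1; rewrite cat_path /= => /and3P [_ _ pr2].
  rewrite last_cat /= in Tzy ne.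
  case: r2 uq pr2 Tzy ne => [|a r2] uq pr2 Tzy ne; first by rewrite eqxx in ne.
  have uc : uniq (y2 :: rcons (a :: r2) y).
    by move: uq; rewrite rcons_cat -cat_cons cat_uniq => /and3P [_ _].
  have := Ta _ uc; rewrite [size _]/= size_rcons => /(_ isT).
  move=> /negP; apply; rewrite /cycle.
  by rewrite !rcons_path pr2 Tzy last_rcons Ty2.
Qed.

Lemma R_now k s (Q : board -> Prop) : Q s -> R k s Q.
Proof. by move=> H; apply: (@R_mono_k 0); [left|exact: leq0n]. Qed.

Lemma redpC s a b : redp s a b = redp s b a.
Proof. by rewrite /redp minnC maxnC. Qed.
Lemma bluepC s a b : bluep s a b = bluep s b a.
Proof. by rewrite /bluep minnC maxnC. Qed.

Lemma queries (Q : board -> Prop) w (L : seq nat) s :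
  (forall w', w' \in L -> w' != w) ->
  (forall w', w' \in L -> forall s', bsub s s' -> redp s' w w' -> Q s') ->
  R (size L) s (fun s' => Q s' \/ forall w', w' \in L -> bluep s' w w').
Proof.
elim: L s => [|w' L IH] s Hn Hr; first by left; right.
right; exists (minn w w'), (maxn w w'); split.
  have := Hn w' (mem_head _ _); move/eqP => ne; lia.
case.
- apply: (@R_mono_k 0); last exact: leq0n.
  left; left; apply: (Hr w' (mem_head _ _)); first exact: bsub_rcons.
  by rewrite /redp mem_rcons mem_head.
- set s0 := rcons s _.
  have H1 : forall w0, w0 \in L -> w0 != w.
    by move=> w0 w0L; apply: Hn; rewrite in_cons w0L orbT.
  have H2 : forall w0, w0 \in L -> forall s', bsub s0 s' -> redp s' w w0 -> Q s'.
    move=> w0 w0L s' Hs'; apply: (Hr w0); first by rewrite in_cons w0L orbT.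
    by apply: bsub_trans Hs'; apply: bsub_rcons.
  apply: (R_conseq (IH s0 H1 H2)).
  move=> s' Hs' [HQ|Hb]; [by left|right] => w0; rewrite in_cons => /orP [/eqP ->|/Hb //].
  by apply: Hs'; rewrite mem_rcons mem_head.
Qed.

Lemma main m : forall T : rel 'I_m, symmetric T -> irreflexive T -> acyclic_graph T ->
  exists C, forall n, 0 < n -> R (C * n ^ m) [::] (builder_has_won T (@complete_rel n)).
Proof.
elim: m => [|m IHm] T Ts Ti Ta.
  exists 0 => n _; left; left; exists (fun _ => 0); split; by case.
have [v Hv] := leaf Ts Ti Ta.
set T' := fun j j' : 'I_m => T (lift v j) (lift v j').
have T's : symmetric T' by move=> i j; rewrite /T' Ts.
have T'i : irreflexive T' by move=> i; rewrite /T' Ti.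
have [C' HC'] := IHm T' T's T'i (sub_acyclic v Ta).
case: Hv => [Hiso|[u [Tvu Hu]]].
- exists C' => n n0.
  have [B HB] := R_RB (HC' n n0).
  have hm : forall i j, i < j -> i.+1 * 2 < j.+1 * 2 by move=> i j ij; lia.
  have HR := @relabel (fun i => i.+1 * 2) B _ [::] [::] _ hm HB (fun x (xi : x \in [::]) => False_ind _ (notF xi)) (fun x xi => xi).
  apply: (@R_mono_k (C' * n ^ m)); last first.
    apply: leq_mul => //; apply: leq_pexp2l => //.
  apply: (R_conseq HR) => s' _ [t' [[Hr|Hbl] [Hbd Ht]]]; last first.
    by right; apply: push_copy hm Hbl Ht.
  left; have [f [fi [fe fB]]] := clamp Hr Hbd.
  have vm : (v : nat) <= m by rewrite -ltnS.
  have [lo' [_ [_ [sl sr]]]] := @slot m f v 0 2 (B + m) fi vm fB.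
  apply: (@ins_copy m T v (fun j => (f j).+1 * 2) lo'.+1).
  + exact: Ts.
  + by move=> i j ij; have := fi i j ij; lia.
  + move=> i j ij eij; apply: Ht; exact: (map_f (push (fun i => i.+1 * 2)) (fe i j ij eij)).
  + by move=> j jv; have := sl j jv; lia.
  + by move=> j jv; have := sr j jv; lia.
  + by move=> j; rewrite (negbTE (Hiso _)).
- exists C'.+1 => n n0.
  have uv : v != u by apply/eqP => e; rewrite -e Ti in Tvu.
  have [u' eu _] := unlift_some uv.
  have m0 : 0 < m := leq_ltn_trans (leq0n _) (ltn_ord u').
  set K := C' * n ^ m.
  have [B HB] := R_RB (HC' n n0).
  set P := (B + m).+1.
  have P0 : 0 < P by [].
  set Gl := builder_has_won T (@complete_rel n).
  have vm : (v : nat) <= m by rewrite -ltnS.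
  have rounds : forall r s (W : seq nat) lo,
    size W + r = n -> uniq W ->
    (forall a b, a \in W -> b \in W -> a != b -> bluep s a b) ->
    (forall w, w \in W -> ~~ (lo < w < lo + P ^ r)) ->
    (forall w, w \in W -> forall x, lo < x < lo + P ^ r -> forall s', bsub s s' ->
        redp s' w x -> contains_copy T true s') ->
    R (r * (K + n)) s Gl.
  { elim=> [|r IHr] s W lo sz uW Wb Wc Wa.
    - apply: R_now; right; apply: (clique (W := W)) => //; by rewrite -sz addn0.
    - set S := P ^ r.
      have S0 : 0 < S by rewrite expn_gt0 P0.
      have PS : P ^ r.+1 = P * S by rewrite expnS.
      rewrite PS in Wc Wa.
      set h := fun i => lo + i.+1 * S.
      have hm : forall i j, i < j -> h i < h j by move=> i j ij; rewrite /h; nia.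
      have HR := @relabel h B _ [::] s _ hm HB (fun x (xi : x \in [::]) => False_ind _ (notF xi)) (fun x xi => False_ind _ (notF xi)).
      have -> : r.+1 * (K + n) = K + (n + r * (K + n)) by rewrite mulSn addnA.
      apply: (R_bind HR) => s1 Hs1 [t' [[Hr|Hbl] [Hbd Ht]]]; last first.
        by apply: R_now; right; apply: push_copy hm Hbl Ht.
      have [f [fi [fe fB]]] := clamp Hr Hbd.
      set g := fun j => lo + (f j).+1 * S.
      set w := g u'.
      have [lo' [lolo' [lo'up [sl sr]]]] := @slot m f v lo S (B + m) fi vm fB.
      have win : lo < w < lo + P * S.
        rewrite /w /g; have := fB u'; rewrite /P; nia.
      have wW : w \notin W by apply/negP => /Wc; rewrite win.
      have HQ := @queries Gl w W s1.
      apply: R_mono_k (R_bind (k' := r * (K + n)) (HQ _ _) _) _.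
      + move=> w' w'W; apply/eqP => e; move: wW; by rewrite -e w'W.
      + move=> w' w'W s' Hs'; rewrite redpC => Hred; left.
        apply: (Wa w' w'W w win); last exact: Hred.
        exact: bsub_trans Hs1 Hs'.
      + move=> s2 Hs2 [HG|Hbl2]; first exact: R_now.
        apply: (IHr s2 (w :: W) lo').
        * by move: sz; rewrite /= addnS.
        * by rewrite /= wW uW.
        * move=> a b; rewrite !in_cons => /orP [/eqP ->|aW] /orP [/eqP ->|bW];
            rewrite ?eqxx // => ab.
          -- exact: Hbl2.
          -- by rewrite bluepC; apply: Hbl2.
          -- by apply: Hs2; apply: Hs1; apply: Wb.
        * move=> a; rewrite in_cons => /orP [/eqP ->|aW].
          -- rewrite /w /g; case: (ltnP u' v) => uvl.
             ++ by have := sl u' uvl; apply: contraL => /andP [H1 H2]; rewrite -ltnNge.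
             ++ by have := sr u' uvl; apply: contraL => /andP [H1 H2]; rewrite -ltnNge.
          -- have := Wc a aW; apply: contra => /andP [H1 H2]; apply/andP; split; lia.
        * move=> a; rewrite in_cons => /orP [/eqP ->|aW] x /andP [x1 x2] s' Hs' Hred.
          -- apply: (@ins_copy m T v g x s' Ts).
             ++ by move=> i j ij; have := fi i j ij; rewrite /g; nia.
             ++ move=> i j ij eij; apply: Hs'; apply: Hs2; apply: Ht.
                exact: (map_f (push h) (fe i j ij eij)).
             ++ by move=> j jv; have := sl j jv; rewrite /g; lia.
             ++ by move=> j jv; have := sr j jv; rewrite /g; lia.
             ++ move=> j /Hu; rewrite eu => /lift_inj ->.
                exact: Hred.
          -- apply: (Wa a aW x); first by apply/andP; split; lia.
             ++ exact: bsub_trans Hs1 (bsub_trans Hs2 Hs').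
             ++ exact: Hred.
      + have : size W <= n by rewrite -sz leq_addr.
        lia. }
  have := rounds n [::] [::] 0 (add0n n) isT (fun a b ai => False_ind _ (notF ai))
     (fun w wi => False_ind _ (notF wi)) (fun w wi => False_ind _ (notF wi)).
  move=> HRn; apply: R_mono_k HRn _.
  have : n <= n ^ m by rewrite -{1}(expn1 n); apply: leq_pexp2l.
  rewrite /K expnS; nia.
Qed.

Theorem theorem5 (l : nat) (T : rel 'I_l) :
  2 <= l -> symmetric T -> irreflexive T -> is_tree T ->
  exists C : nat, forall n : nat, 1 <= n ->
    @online_ordered_ramsey_le l T n (@complete_rel n) (C * n ^ l).
Proof.
move=> _ Ts Ti [_ Ta]; have [C HC] := main Ts Ti Ta.
exists C => n n1; apply: R_toB; exact: HC.
Qed.
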